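(* Let $X$ be an abelian metric group and $f:X\to\mathbb{R}$ any function. Then: (i) if $f$ is locally bounded at some point, then $f$ is bounded on some shift-compact set in $X$; (ii) if $f$ is bounded on some shift-compact set in $X$, then $f$ is a WNT-function.
   Context: An abelian metric group is an abelian topological group whose topology is given by an invariant metric. A set $A\subset X$ is shift-compact if for every sequence $(x_n)$ tending to $0$ in $X$ there exists $x\in X$ such that $\{n\in\mathbb{N}: x+x_n\in A\}$ is infinite. Locally bounded at a point means $|f|$ is bounded on some neighbourhood of that point. For $k\in\mathbb{N}$ let $H^k:=f^{-1}((-k,k))$. $f$ is a WNT-function if for every convergent sequence $(u_n)_{n\in\mathbb{N}}$ in $X$ there exist $k\in\mathbb{N}$, an infinite set $\mathbb{M}\subset\mathbb{N}$ and $t\in X$ such that $\{t+u_m: m\in\mathbb{M}\}\subset H^k$. *)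

(* Defs.v *)
From HB Require Import structures.
From mathcomp Require Import all_boot all_order all_algebra.
From mathcomp Require Import boolp classical_sets cardinality reals.
Set Implicit Arguments. Unset Strict Implicit. Unset Printing Implicit Defensive.
Import Order.TTheory GRing.Theory Num.Theory.
Local Open Scope ring_scope.
Local Open Scope classical_set_scope.

(* An abelian metric group: an abelian group X (zmodType) together with a
   metric d that is translation invariant; the topology of X is the one
   induced by d (group operations are then automatically continuous). *)
Definition invariant_metric (R : realType) (X : zmodType) (d : X -> X -> R) : Prop :=
  [/\ (forall x y, d x y = 0 <-> x = y),
      (forall x y, d x y = d y x),
      (forall x y z, d x z <= d x y + d y z) &
      (forall x y z, d (x + z) (y + z) = d x y)].

Definition cvg_to (R : realType) (X : zmodType) (d : X -> X -> R)
    (u : nat -> X) (l : X) : Prop :=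
  forall e : R, 0 < e -> exists N : nat, forall n : nat, (N <= n)%N -> d (u n) l < e.

Definition convergent (R : realType) (X : zmodType) (d : X -> X -> R)
    (u : nat -> X) : Prop := exists l : X, cvg_to d u l.

Definition shift_compact (R : realType) (X : zmodType) (d : X -> X -> R)
    (A : set X) : Prop :=
  forall u : nat -> X, cvg_to d u 0 ->
    exists x : X, infinite_set [set n : nat | A (x + u n)].

Definition locally_bounded_at (R : realType) (X : zmodType) (d : X -> X -> R)
    (f : X -> R) (p : X) : Prop :=
  exists r : R, 0 < r /\ exists M : R, forall x : X, d x p < r -> `|f x| <= M.

Definition bounded_on (R : realType) (X : zmodType) (f : X -> R) (A : set X) : Prop :=
  exists M : R, forall x : X, A x -> `|f x| <= M.

Definition Hk (R : realType) (X : zmodType) (f : X -> R) (k : nat) : set X :=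
  [set x | - (k%:R) < f x < k%:R].

Definition WNT (R : realType) (X : zmodType) (d : X -> X -> R) (f : X -> R) : Prop :=
  forall u : nat -> X, convergent d u ->
    exists (k : nat) (M : set nat) (t : X),
      infinite_set M /\ [set t + u m | m in M] `<=` Hk f k.

(* Main.v *)
Require Import Defs.
From HB Require Import structures.
From mathcomp Require Import all_boot all_order all_algebra.
From mathcomp Require Import boolp classical_sets cardinality reals.
Import Order.TTheory GRing.Theory Num.Theory.
Local Open Scope ring_scope.
Local Open Scope classical_set_scope.

Lemma inf_ge (N : nat) (P : set nat) : (forall n, (N <= n)%N -> P n) -> infinite_set P.
Proof.
move=> HP; apply: (sub_infinite_set (A := [set n | (N <= n)%N])).
  by move=> n /= /HP.
apply: cofinite_set_infinite; first exact: infinite_nat.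
apply: (sub_finite_set _ (finite_II N)).
by move=> n /=; rewrite leqNgt => /negP/negbNE.
Qed.

Theorem proposition3p3 (R : realType) (X : zmodType) (d : X -> X -> R)
    (Hd : invariant_metric d) (f : X -> R) :
  ((exists p : X, locally_bounded_at d f p) ->
     exists A : set X, shift_compact d A /\ bounded_on f A) /\
  ((exists A : set X, shift_compact d A /\ bounded_on f A) -> WNT d f).
Proof.
case: Hd => H0 Hs Ht Hi.
split.
- move=> [p [r [r0 [M HM]]]].
  exists [set x | d x p < r]; split; last by exists M.
  move=> u cu; exists p; have [N HN] := cu r r0.
  apply: (@inf_ge N) => n /HN /=.
  by rewrite addrC -{2}(add0r p) Hi.
- move=> [A [sA [M HM]]] u [l cu].
  have cv : cvg_to d (fun n => u n - l) 0.
    move=> e e0; have [N HN] := cu e e0; exists N => n /HN.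
    by rewrite -(Hi _ _ (- l)) subrr.
  have [x Hx] := sA _ cv.
  exists (Num.Def.truncn M).+1, [set n | A (x + (u n - l))], (x - l); split => //.
  move=> y Hy. case: Hy => m Am <-.
  have E : x + (u m - l) = x - l + u m by rewrite addrCA addrC.
  have := HM _ Am; rewrite E => Hf; have HT := truncnS_gt M.
  rewrite /Hk /=; apply/andP; split.
  + rewrite ltrNl; apply: le_lt_trans HT; apply: le_trans (ler_norm (- f _)) _; by rewrite normrN.
  + apply: le_lt_trans HT; apply: le_trans Hf; exact: ler_norm.
Qed.
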